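(* Let $X$ be a non-empty set and let $R$ be a binary relation on $X$. The following are equivalent: (a) There exists a non-empty $w$-stable set of $(X,R)$. (b) There exists a compact topology $\tau$ on $X$ with respect to which $R$ is generalized upper tc-semicontinuous.
   Context: For a binary relation $R$ on $X$, write $xRy$ for $(x,y)\in R$. The transitive closure $\overline{R}$ of $R$ is defined by: $x\overline{R}y$ iff there exist $K\in\mathbb{N}$, $K\ge 1$, and $x_0,\dots,x_K\in X$ with $x_0=x$, $x_K=y$, and $x_{k-1}Rx_k$ for all $k\in\{1,\dots,K\}$. The asymmetric part of a relation $Q$ is $P(Q)$, defined by $xP(Q)y$ iff $xQy$ and not $yQx$. A set $F\subseteq X$ is a $w$-stable set of $(X,R)$ if (i) (internal stability) for all distinct $x,y\in F$, $(x,y)\notin\overline{R}$; and (ii) (external stability) for all $x\in F$ and $y\in X\setminus F$, if $y\overline{R}x$ then $x\overline{R}y$. The relation $R$ is generalized upper tc-semicontinuous with respect to a topology $\tau$ on $X$ if for every $x\in X$ the set $\{y\in X : xP(\overline{R})y\}$ is open in $\tau$. A topology is compact if every open cover of $X$ has a finite subcover. *)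

(* Defs.v *)
From Stdlib Require Import List Arith.

Definition tc {X : Type} (R : X -> X -> Prop) (x y : X) : Prop :=
  exists (K : nat) (s : nat -> X),
    1 <= K /\ s 0 = x /\ s K = y /\
    (forall k, 1 <= k -> k <= K -> R (s (k - 1)) (s k)).

Definition asym {X : Type} (Q : X -> X -> Prop) (x y : X) : Prop :=
  Q x y /\ ~ Q y x.

Definition w_stable {X : Type} (R : X -> X -> Prop) (F : X -> Prop) : Prop :=
  (forall x y, F x -> F y -> x <> y -> ~ tc R x y) /\
  (forall x y, F x -> ~ F y -> tc R y x -> tc R x y).

Definition is_topology {X : Type} (T : (X -> Prop) -> Prop) : Prop :=
  T (fun _ => True) /\
  T (fun _ => False) /\
  (forall U V, T U -> T V -> T (fun x => U x /\ V x)) /\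
  (forall C : (X -> Prop) -> Prop, (forall U, C U -> T U) ->
     T (fun x => exists U, C U /\ U x)).

Definition compact_top {X : Type} (T : (X -> Prop) -> Prop) : Prop :=
  forall C : (X -> Prop) -> Prop,
    (forall U, C U -> T U) ->
    (forall x, exists U, C U /\ U x) ->
    exists l : list (X -> Prop),
      (forall U, In U l -> C U) /\ (forall x, exists U, In U l /\ U x).

Definition gen_upper_tc_sc {X : Type} (R : X -> X -> Prop)
    (T : (X -> Prop) -> Prop) : Prop :=
  forall x, T (fun y => asym (tc R) x y).

(* Main.v *)
Require Import Defs.
From Stdlib Require Import List Arith Lia Classical.

Lemma tc_trans {X : Type} (R : X -> X -> Prop) x y z :
  tc R x y -> tc R y z -> tc R x z.
Proof.
  intros [K1 [s1 [H1 [H2 [H3 H4]]]]] [K2 [s2 [G1 [G2 [G3 G4]]]]].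
  exists (K1 + K2), (fun k => if k <=? K1 then s1 k else s2 (k - K1)).
  split; [lia|]. split.
  { simpl. exact H2. }
  split.
  { destruct (Nat.leb_spec (K1 + K2) K1); [lia|]. replace (K1 + K2 - K1) with K2 by lia. exact G3. }
  intros k Hk1 Hk2.
  destruct (Nat.leb_spec k K1).
  - destruct (Nat.leb_spec (k-1) K1); [|lia]. apply H4; lia.
  - destruct (Nat.leb_spec (k-1) K1).
    + assert (k - 1 = K1) by lia. rewrite H5, H3, <- G2.
      replace (k - K1) with 1 by lia. apply (G4 1); lia.
    + replace (k - 1 - K1) with (k - K1 - 1) by lia. apply G4; lia.
Qed.

Section Max.
Context {X : Type} (R : X -> X -> Prop).
Let S x := fun y => asym (tc R) x y.

Lemma P_trans a b c : asym (tc R) a b -> asym (tc R) b c -> asym (tc R) a c.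
Proof.
  intros [h1 h2] [h3 h4]. split. eapply tc_trans; eauto.
  intro h. apply h4. eapply tc_trans; eauto.
Qed.

Lemma P_irr a : ~ asym (tc R) a a.
Proof. intros [h1 h2]; auto. Qed.

Lemma maxl : forall l : list (X -> Prop),
  (forall U, In U l -> exists x, U = S x) -> (exists U, In U l) ->
  exists x, In (S x) l /\ forall y, In (S y) l -> ~ asym (tc R) y x.
Proof.
  induction l as [|U l IH]; intros Hl [U0 HU0]; [destruct HU0|].
  destruct (Hl U (or_introl eq_refl)) as [a Ha]. subst U.
  destruct l as [|V l'].
  - exists a. split; [left; reflexivity|]. intros y [Hy|[]] Hya.
    pose proof (f_equal (fun f => f a) Hy) as Hq; cbv beta in Hq; unfold S in Hq; rewrite <- Hq in Hya; apply (P_irr a); exact Hya.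
  - destruct IH as [x [Hx Hmax]].
    { intros W HW. apply Hl. right; exact HW. }
    { exists V; left; reflexivity. }
    destruct (classic (asym (tc R) a x)) as [Hax|Hax].
    + exists a. split; [left; reflexivity|]. intros y [Hy|Hy] Hya.
      * pose proof (f_equal (fun f => f a) Hy) as Hq; cbv beta in Hq; unfold S in Hq; rewrite <- Hq in Hya; apply (P_irr a); exact Hya.
      * apply (Hmax y Hy). eapply P_trans; eauto.
    + exists x. split; [right; exact Hx|]. intros y [Hy|Hy] Hyx.
      * pose proof (f_equal (fun f => f x) Hy) as Hq; cbv beta in Hq; unfold S in Hq; rewrite <- Hq in Hyx; apply Hax; exact Hyx.
      * apply (Hmax y Hy Hyx).
Qed.
End Max.

Theorem theorem1 (X : Type) (R : X -> X -> Prop) (hX : inhabited X) :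
  (exists F : X -> Prop, (exists x, F x) /\ w_stable R F) <->
  (exists T : (X -> Prop) -> Prop,
     is_topology T /\ compact_top T /\ gen_upper_tc_sc R T).
Proof.
  split.
  - intros [F [[x0 Hx0] [Hin Hext]]].
    exists (fun U => U x0 -> forall y, U y).
    split; [|split].
    + split; [intros; exact I|]. split; [intros []|]. split.
      * intros U V HU HV [h1 h2] y. split; [apply HU|apply HV]; assumption.
      * intros C HC [U [CU Ux0]] y. exists U. split; [exact CU|]. apply (HC U CU Ux0).
    + intros C HC Hcov. destruct (Hcov x0) as [U [CU Ux0]].
      exists (U :: nil). split.
      * intros V [<-|[]]; exact CU.
      * intros y. exists U. split; [left; reflexivity|]. apply (HC U CU Ux0).
    + intros x [h1 h2]. exfalso.
      destruct (classic (F x)) as [Fx|nFx].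
      * destruct (classic (x = x0)) as [e|ne].
        -- subst; auto.
        -- apply (Hin x x0 Fx Hx0 ne h1).
      * apply h2. apply (Hext x0 x Hx0 nFx h1).
  - intros [T [HT [Hc Hsc]]].
    destruct (classic (exists x0, forall x, ~ asym (tc R) x x0)) as [[x0 Hx0]|Hno].
    + exists (fun y => y = x0). split; [exists x0; reflexivity|]. split.
      * intros x y -> -> ne. congruence.
      * intros x y -> ny hyx. destruct (classic (tc R x0 y)) as [h|h]; [exact h|].
        exfalso. apply (Hx0 y). split; assumption.
    + exfalso.
      destruct (Hc (fun U => exists x, U = (fun y => asym (tc R) x y))) as [l [Hl Hcov]].
      * intros U [x ->]. apply Hsc.
      * intros y. destruct (classic (exists x, asym (tc R) x y)) as [[x Hx]|Hn].
        -- exists (fun z => asym (tc R) x z). split; [exists x; reflexivity|exact Hx].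
        -- exfalso. apply Hno. exists y. intros x Hx. apply Hn. exists x; exact Hx.
      * destruct hX as [a]. destruct (Hcov a) as [U0 [HU0 _]].
        destruct (maxl R l Hl (ex_intro _ U0 HU0)) as [x [_ Hmax]].
        destruct (Hcov x) as [V [HV Vx]].
        destruct (Hl V HV) as [y ->].
        apply (Hmax y HV Vx).
Qed.
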